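(* Let $n\ge1$, $d=2^n$, and let $|\psi\rangle$ be an $n$-qubit pure state. For a Clifford unitary $C$ and $\mathbf{s}\in\{0,1\}^n$ let $P(\mathbf{s}|C)=|\langle\mathbf{s}|C|\psi\rangle|^2$, and for $\mathbf{s}_1,\mathbf{s}_2,\mathbf{s}_3,\mathbf{s}_4\in\{0,1\}^n$ let $\mathcal{Q}(\mathbf{s}_1,\mathbf{s}_2,\mathbf{s}_3,\mathbf{s}_4)=\mathbb{E}_C\big[P(\mathbf{s}_1|C)P(\mathbf{s}_2|C)P(\mathbf{s}_3|C)P(\mathbf{s}_4|C)\big]$, where $\mathbb{E}_C$ is the average over the uniform distribution on the $n$-qubit Clifford group. Then $$M_2(|\psi\rangle)=-\log\sum_{\mathbf{s}_1,\dots,\mathbf{s}_4\in\{0,1\}^n}(-2)^{-\|\mathbf{s}_1\oplus\mathbf{s}_2\oplus\mathbf{s}_3\oplus\mathbf{s}_4\|}\,\mathcal{Q}(\mathbf{s}_1,\mathbf{s}_2,\mathbf{s}_3,\mathbf{s}_4)-\log d,$$ where $\oplus$ is bitwise addition mod 2 and $\|\mathbf{x}\|$ is the Hamming weight of $\mathbf{x}\in\{0,1\}^n$.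
   Context: Logarithms are base 2. $\mathcal{P}_n$ is the set of the $4^n$ $n$-qubit Pauli strings $\sigma_1\otimes\cdots\otimes\sigma_n$, $\sigma_i\in\{I,X,Y,Z\}$. The stabilizer 2-Rényi entropy is $M_2(|\psi\rangle)=-\log\sum_{P\in\mathcal{P}_n}\Xi_P(|\psi\rangle)^2-\log d$ with $\Xi_P(|\psi\rangle)=d^{-1}\langle\psi|P|\psi\rangle^2$. The Clifford group consists of the unitaries $C$ with $CPC^\dagger\in\{\pm1,\pm i\}\mathcal{P}_n$ for all $P\in\mathcal{P}_n$ (global phases do not affect $P(\mathbf{s}|C)$, so the uniform average is over the finite group modulo phases). $|\mathbf{s}\rangle$ denotes the computational basis state labeled by the bit string $\mathbf{s}$. *)

(* Defs.v *)
From HB Require Import structures.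
From mathcomp Require Import all_boot all_order all_algebra.
From mathcomp Require Import complex.
From mathcomp Require Import reals exp.
Set Implicit Arguments. Unset Strict Implicit. Unset Printing Implicit Defensive.
Import Order.TTheory GRing.Theory Num.Theory.
Local Open Scope ring_scope.

Section QDefs.
Variable R : realType.
Local Notation C := R[i].

Definition log2 (x : R) : R := ln x / ln 2.

Definition sqnorm (z : C) : R := (complex.Re z) ^+ 2 + (complex.Im z) ^+ 2.

Definition dagger m k (A : 'M[C]_(m, k)) : 'M[C]_(k, m) := (map_mx conjc A)^T.

Variable n : nat.
Local Notation d := (2 ^ n)%N.

(* Computational basis: the index i : 'I_(2^n) labels the bit string
   s = (s_0, ..., s_{n-1}) with i = sum_j s_j 2^j. *)
Definition bit (i : 'I_d) (j : 'I_n) : bool := odd (i %/ 2 ^ j).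

(* single-qubit Paulis: 0 = I, 1 = X, 2 = Y, 3 = Z; entry (row a, column b) *)
Definition pauli1 (p : 'I_4) (a b : bool) : C :=
  match val p with
  | 0 => if a == b then 1 else 0
  | 1 => if a != b then 1 else 0
  | 2 => if a == b then 0 else if a then 'i%C else - 'i%C
  | _ => if a == b then (if a then -1 else 1) else 0
  end.

Definition pauli_label := {ffun 'I_n -> 'I_4}.

(* the tensor product sigma_{p 0} (x) ... (x) sigma_{p (n-1)}, entrywise *)
Definition pauli (p : pauli_label) : 'M[C]_d :=
  \matrix_(i, k) \prod_(j < n) pauli1 (p j) (bit i j) (bit k j).

Definition unitary (U : 'M[C]_d) : Prop := U *m dagger U = 1%:M.

Definition clifford (U : 'M[C]_d) : Prop :=
  unitary U /\
  forall p : pauli_label, exists (q : pauli_label) (k : 'I_4),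
    U *m pauli p *m dagger U = ('i%C ^+ k) *: pauli q.

Definition phase_equiv (U V : 'M[C]_d) : Prop :=
  exists c : C, `|c| = 1 /\ U = c *: V.

Definition clifford_transversal (reps : seq 'M[C]_d) : Prop :=
  (forall U, U \in reps -> clifford U) /\
  (forall U, clifford U -> exists! j : 'I_(size reps), phase_equiv U (nth 0 reps j)).

Definition normalized (psi : 'cV[C]_d) : Prop := \sum_i sqnorm (psi i 0) = 1.

(* <psi| P |psi>, real for Hermitian P; we take its real part *)
Definition pauli_expect (psi : 'cV[C]_d) (p : pauli_label) : R :=
  complex.Re ((dagger psi *m pauli p *m psi) 0 0).

Definition Xi (psi : 'cV[C]_d) (p : pauli_label) : R :=
  (d%:R)^-1 * (pauli_expect psi p) ^+ 2.

Definition M2 (psi : 'cV[C]_d) : R :=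
  - log2 (\sum_(p : pauli_label) (Xi psi p) ^+ 2) - log2 d%:R.

Definition Pout (psi : 'cV[C]_d) (U : 'M[C]_d) (s : 'I_d) : R :=
  sqnorm ((U *m psi) s 0).

(* uniform average over the Clifford group modulo phases *)
Definition Qavg (psi : 'cV[C]_d) (reps : seq 'M[C]_d) (s1 s2 s3 s4 : 'I_d) : R :=
  (size reps)%:R^-1 *
  \sum_(U <- reps) (Pout psi U s1 * Pout psi U s2 * Pout psi U s3 * Pout psi U s4).

Definition xor_weight (s1 s2 s3 s4 : 'I_d) : nat :=
  #|[set j : 'I_n | bit s1 j (+) bit s2 j (+) bit s3 j (+) bit s4 j]|.

End QDefs.

(* Main.v *)
Require Import Defs.
From HB Require Import structures.
From mathcomp Require Import all_boot all_order all_algebra.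
From mathcomp Require Import complex.
From mathcomp Require Import reals exp.
From mathcomp Require Import ring lra.
Import Order.TTheory GRing.Theory Num.Theory.
Local Open Scope ring_scope.
Set Implicit Arguments. Unset Strict Implicit. Unset Printing Implicit Defensive.
Local Open Scope nat_scope.
Lemma bits_nat_inj (n i k : nat) : (i < 2 ^ n)%N -> (k < 2 ^ n)%N ->
  (forall j, (j < n)%N -> odd (i %/ 2 ^ j) = odd (k %/ 2 ^ j)) -> i = k.
Proof.
elim: n i k => [|n IH] i k.
  by rewrite expn0 !ltnS !leqn0 => /eqP -> /eqP ->.
move=> hi hk hb.
have h0 : odd i = odd k by have := hb 0%N isT; rewrite expn0 !divn1.
have hh : i %/ 2 = k %/ 2.
  apply: IH.
  - by rewrite ltn_divLR // -expnSr.
  - by rewrite ltn_divLR // -expnSr.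
  move=> j hj; rewrite -!divnMA -expnS; exact: hb.
by rewrite (divn_eq i 2) (divn_eq k 2) hh !modn2 h0.
Qed.

Local Open Scope ring_scope.
Section Aux.
Context {R : realType}.
Local Notation C := R[i].
Variable n : nat.
Local Notation d := (2 ^ n)%N.

Lemma bits_inj (i k : 'I_d) : (forall j : 'I_n, bit i j = bit k j) -> i = k.
Proof.
move=> h; apply: val_inj; apply: (@bits_nat_inj n _ _ (ltn_ord i) (ltn_ord k)) => j hj.
exact: (h (Ordinal hj)).
Qed.

Lemma bits_neq (i k : 'I_d) : i != k -> exists j : 'I_n, bit i j != bit k j.
Proof.
move=> hik; have : [exists j : 'I_n, bit i j != bit k j].
  apply: contraR hik => /existsPn h; apply/eqP/bits_inj => j.
  by apply/eqP; have := h j; rewrite negbK.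
by move/existsP.
Qed.

Definition tobits (i : 'I_d) : {ffun 'I_n -> bool} := [ffun j => bit i j].

Lemma tobits_bij : bijective tobits.
Proof.
apply: inj_card_bij.
  by move=> i k /ffunP h; apply: bits_inj => j; have := h j; rewrite !ffunE.
by rewrite card_ffun card_bool !card_ord.
Qed.

Lemma sum_bits (T : nmodType) (F : {ffun 'I_n -> bool} -> T) :
  \sum_(i : 'I_d) F (tobits i) = \sum_f F f.
Proof.
by rewrite [RHS](reindex tobits) //; apply: onW_bij; exact: tobits_bij.
Qed.
End Aux.
Section Q1.
Context {R : realType}.
Local Notation C := R[i].

Definition pmuln (x y : nat) : nat :=
  match x, y with
  | 0, y => y | x, 0 => x
  | 1, 1 => 0 | 1, 2 => 3 | 1, _ => 2
  | 2, 1 => 3 | 2, 2 => 0 | 2, _ => 1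
  | _, 1 => 2 | _, 2 => 1 | _, _ => 0 end.
Definition pmul (x y : 'I_4) : 'I_4 := inord (pmuln x y).

Definition ph1 (x y : 'I_4) : C :=
  match val x, val y with
  | 1, 2 => 'i%C | 2, 1 => - 'i%C
  | 2, 3 => 'i%C | 3, 2 => - 'i%C
  | 3, 1 => 'i%C | 1, 3 => - 'i%C
  | _, _ => 1 end.

Definition anti1 (x y : 'I_4) : bool := [&& x != 0, y != 0 & x != y].
Definition sgn1 (x y : 'I_4) : C := if anti1 x y then -1 else 1.

Lemma i2 : ('i%C : C) * 'i%C = -1.
Proof. by rewrite -expr2 sqr_i. Qed.

Ltac crunch := rewrite ?(big_bool, mul0r, mulr0, mul1r, mulr1, add0r, addr0, mulrN, mulNr, opprK, i2, oppr0) //=.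

Ltac cases4 x := case: x => [[|[|[|[|?]]]] ?] //.

Lemma pauli1_mul (x y : 'I_4) (a b : bool) :
  \sum_(c : bool) pauli1 R x a c * pauli1 R y c b = ph1 x y * pauli1 R (pmul x y) a b.
Proof.
cases4 x; cases4 y;
  case: a; case: b; rewrite /pauli1 /ph1 /pmul /= ?inordK //=; crunch; crunch.
Qed.

Lemma pmulC x y : pmul x y = pmul y x.
Proof. by cases4 x; cases4 y. Qed.

Lemma pmulxx x : pmul x x = 0.
Proof. by cases4 x; apply/val_inj; rewrite /= inordK. Qed.

Lemma pmul_eq0 x y : pmul x y = 0 -> x = y.
Proof.
by cases4 x; cases4 y; move/(congr1 val); rewrite /= inordK // => h;
  first [ by apply: val_inj | discriminate h ].
Qed.

Lemma pmulx0 x : pmul x 0 = x.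
Proof. by cases4 x; apply/val_inj; rewrite /= inordK. Qed.

Lemma ph1C x y : ph1 x y = sgn1 x y * ph1 y x.
Proof. by cases4 x; cases4 y; rewrite /sgn1 /anti1 /ph1 /=; crunch. Qed.

Lemma ph1xx x : ph1 x x = 1.
Proof. by cases4 x. Qed.

Lemma ph1x0 x : ph1 x 0 = 1.
Proof. by cases4 x. Qed.

Lemma conj_i : (('i%C : C)^*)%C = - 'i%C.
Proof. by apply/eqP; rewrite eq_complex /= oppr0 !eqxx. Qed.

Lemma pauli1_conj x a b : ((pauli1 R x a b)^*)%C = pauli1 R x b a.
Proof.
cases4 x; case: a; case: b; rewrite /pauli1 /= ?conjc0 ?conjc1 ?rmorphN ?conjc1 ?conj_i ?opprK //;
  by apply/eqP; rewrite eq_complex /= ?oppr0 ?opprK ?eqxx.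
Qed.

Lemma pauli1_tr x : \sum_(b : bool) pauli1 R x b b = if x == 0 then 2 else 0.
Proof. cases4 x; rewrite big_bool /pauli1 /=; crunch; rewrite ?subrr ?addNr //. Qed.
End Q1.

Section Q1b.
Context {R : realType}.
Local Notation C := R[i].
Ltac cases4 x := case: x => [[|[|[|[|?]]]] ?] //.

Definition anti_of (y : 'I_4) : 'I_4 := if y == 1 then inord 3 else inord 1.

Lemma anti1C x y : anti1 x y = anti1 y x.
Proof. by cases4 x; cases4 y. Qed.

Lemma anti1_0x x : anti1 0 x = false.
Proof. by cases4 x. Qed.

Lemma anti1_x0 x : anti1 x 0 = false.
Proof. by cases4 x. Qed.

Lemma anti_ofP y : y != 0 -> anti1 y (anti_of y).
Proof. by cases4 y => _; rewrite /anti_of /anti1 /= -!val_eqE /= ?inordK. Qed.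

Lemma anti_pmul y y' : y != 0 -> y' != 0 -> y != y' ->
  anti1 y (pmul y y') && anti1 y' (pmul y y').
Proof. by cases4 y; cases4 y'; rewrite /pmul /anti1 /= -!val_eqE /= ?inordK. Qed.

Lemma sgn1C x y : sgn1 x y = sgn1 y x :> C.
Proof. by rewrite /sgn1 anti1C. Qed.

Definition iph (c : C) := exists k : 'I_4, c = 'i%C ^+ k.

Lemma i4 : ('i%C : C) ^+ 4 = 1.
Proof. by rewrite (exprM _ 2 2) sqr_i sqrrN expr1n. Qed.

Lemma iexp_mod m : ('i%C : C) ^+ m = 'i%C ^+ (m %% 4).
Proof. by rewrite {1}(divn_eq m 4) exprD mulnC exprM i4 expr1n mul1r. Qed.

Lemma iphM x y : iph x -> iph y -> iph (x * y).
Proof.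
move=> [a ->] [b ->]; exists (Ordinal (ltn_pmod (a + b) (isT : (0 < 4)%N))).
by rewrite -exprD /= -iexp_mod.
Qed.

Lemma iph1 : iph 1.
Proof. by exists 0. Qed.

Lemma iphi : iph 'i%C.
Proof. by exists 1. Qed.

Lemma iphN1 : iph (-1).
Proof. by exists (inord 2); rewrite inordK // sqr_i. Qed.

Lemma iphN x : iph x -> iph (- x).
Proof. by move=> h; rewrite -mulN1r; apply: iphM => //; exact: iphN1. Qed.

Lemma iph_prod (I : finType) (F : I -> C) : (forall i, iph (F i)) -> iph (\prod_i F i).
Proof. by move=> h; apply: (big_ind iph) => //; [exact: iph1 | move=> *; exact: iphM]. Qed.

Lemma iph_ph1 x y : iph (ph1 x y : C).
Proof. rewrite /ph1; cases4 x; cases4 y; rewrite /=; first [exact: iph1 | exact: iphi | apply: iphN; exact: iphi]. Qed.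

Lemma iph_sgn1 x y : iph (sgn1 x y : C).
Proof. by rewrite /sgn1; case: anti1; [exact: iphN1 | exact: iph1]. Qed.

Lemma iph_neq0 x : iph x -> x != 0.
Proof.
move=> [k ->]; apply: expf_neq0; apply/eqP => h; have := @sqr_i R.
by rewrite h expr2 mul0r => /eqP; rewrite eq_sym oppr_eq0 oner_eq0.
Qed.
End Q1b.
Section PauliN.
Context {R : realType}.
Local Notation C := R[i].
Variable n : nat.
Local Notation d := (2 ^ n)%N.
Local Notation PL := (pauli_label n).
Local Notation P := (@pauli R n).
Implicit Types p q r : PL.

Definition plab (p q : PL) : PL := [ffun j => pmul (p j) (q j)].
Definition pph (p q : PL) : C := \prod_j ph1 (p j) (q j).
Definition psg (p q : PL) : C := \prod_j sgn1 (p j) (q j).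
Definition pid : PL := [ffun => 0].

Lemma pauli_mul p q : P p *m P q = pph p q *: P (plab p q).
Proof.
apply/matrixP => i k; rewrite !mxE.
under eq_bigr => l _ do rewrite !mxE -big_split /=.
pose G (f : {ffun 'I_n -> bool}) :=
  \prod_j (pauli1 R (p j) (bit i j) (f j) * pauli1 R (q j) (f j) (bit k j)).
rewrite (eq_bigr (fun l => G (tobits l))); last first.
  by move=> l _; rewrite /G; apply: eq_bigr => j _; rewrite ffunE.
rewrite sum_bits /G -(bigA_distr_bigA (fun j c =>
  pauli1 R (p j) (bit i j) c * pauli1 R (q j) c (bit k j))) /=.
under eq_bigr => j _ do rewrite pauli1_mul.
by rewrite big_split /=; congr (_ * _); apply: eq_bigr => j _; rewrite ffunE.
Qed.

Lemma mx1_neq0 : (1%:M : 'M[C]_d) != 0.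
Proof.
apply/negP => /eqP /matrixP h.
have := h (Ordinal (expn_gt0 2 n)) (Ordinal (expn_gt0 2 n)).
by rewrite !mxE eqxx /= => /eqP; rewrite oner_eq0.
Qed.

Lemma pauli_id : P pid = 1%:M.
Proof.
apply/matrixP => i k; rewrite !mxE.
have [->|hik] := eqVneq i k.
  by apply: big1 => j _; rewrite ffunE /pauli1 /= eqxx.
have [j hj] := bits_neq hik.
by rewrite (bigD1 j) //= ffunE /pauli1 /= (negbTE hj) mul0r.
Qed.

Lemma plabxx p : plab p p = pid.
Proof. by apply/ffunP => j; rewrite !ffunE pmulxx. Qed.

Lemma pphxx p : pph p p = 1.
Proof. by apply: big1 => j _; rewrite ph1xx. Qed.

Lemma pauli_sq p : P p *m P p = 1%:M.
Proof. by rewrite pauli_mul plabxx pphxx scale1r pauli_id. Qed.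

Lemma plabC p q : plab p q = plab q p.
Proof. by apply/ffunP => j; rewrite !ffunE pmulC. Qed.

Lemma pphC p q : pph p q = psg p q * pph q p.
Proof. by rewrite /pph /psg -big_split; apply: eq_bigr => j _; rewrite ph1C. Qed.

Lemma pauli_comm p q : P p *m P q = psg p q *: (P q *m P p).
Proof. by rewrite !pauli_mul scalerA -pphC plabC. Qed.

Lemma psg_pm p q : psg p q = 1 \/ psg p q = -1.
Proof.
rewrite /psg; apply: (big_ind (fun x : C => x = 1 \/ x = -1)); first by left.
  move=> x y [->|->] [->|->]; rewrite ?mul1r ?mulr1 ?mulrNN ?mulr1;
  by [left | right].
by move=> j _; rewrite /sgn1; case: anti1; [right | left].
Qed.

Lemma dagger_pauli p : dagger (P p) = P p.
Proof.
apply/matrixP => i k; rewrite !mxE rmorph_prod.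
by apply: eq_bigr => j _; exact: pauli1_conj.
Qed.

Lemma pauli_tr p : p != pid -> \tr (P p) = 0.
Proof.
move=> hp; rewrite /mxtrace.
under eq_bigr => i _ do rewrite mxE.
pose G (f : {ffun 'I_n -> bool}) := \prod_j pauli1 R (p j) (f j) (f j).
rewrite (eq_bigr (fun l => G (tobits l))); last first.
  by move=> l _; rewrite /G; apply: eq_bigr => j _; rewrite ffunE.
rewrite sum_bits /G -(bigA_distr_bigA (fun j c => pauli1 R (p j) c c)) /=.
have [j hj] : exists j, p j != 0.
  apply/existsP; apply: contraR hp => /existsPn h; apply/eqP/ffunP => j.
  by rewrite ffunE; apply/eqP; have := h j; rewrite negbK.
by rewrite (bigD1 j) //= pauli1_tr (negbTE hj) mul0r.
Qed.

Lemma pauli_neq0 p : P p != 0.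
Proof.
apply: contraNneq mx1_neq0 => h.
by rewrite -(pauli_sq p) h mul0mx.
Qed.

Lemma pauli_lin p q (c : C) : P p = c *: P q -> p = q.
Proof.
move=> h; apply/eqP; apply: contraT => hpq.
have e : P q *m P p = c *: 1%:M by rewrite h -scalemxAr pauli_sq.
have hl : plab q p != pid.
  apply: contra hpq => /eqP /ffunP hh; apply/eqP/ffunP => j.
  by have := hh j; rewrite !ffunE => /pmul_eq0 ->.
have := congr1 mxtrace e.
rewrite pauli_mul !mxtraceZ pauli_tr // mxtrace1 mulr0 => /esym /eqP.
rewrite mulf_eq0 pnatr_eq0 expn_eq0 /= orbF => /eqP c0.
by move: (pauli_neq0 p); rewrite h c0 scale0r eqxx.
Qed.
End PauliN.
Section Cliff.
Context {R : realType}.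
Local Notation C := R[i].
Variable n : nat.
Local Notation d := (2 ^ n)%N.
Local Notation PL := (pauli_label n).
Local Notation P := (@pauli R n).
Implicit Types p q r : PL.
Implicit Types U V : 'M[C]_d.
Local Notation psg := (@psg R n).
Local Notation pph := (@pph R n).

Lemma psgC p q : psg p q = psg q p.
Proof. by apply: eq_bigr => j _; rewrite sgn1C. Qed.

Lemma iph_pph p q : iph (pph p q).
Proof. by apply: iph_prod => j; exact: iph_ph1. Qed.

Lemma iph_psg p q : iph (psg p q).
Proof. by apply: iph_prod => j; exact: iph_sgn1. Qed.

Lemma psg_single p q (k : 'I_n) : (forall j, anti1 (p j) (q j) = (j == k)) -> psg p q = -1.
Proof.
move=> h; rewrite /psg (bigD1 k) //= big1 => [|j hj]; first by rewrite /sgn1 h eqxx mulr1.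
by rewrite /sgn1 h (negbTE hj).
Qed.

Lemma anti_exists q q' : q != pid n -> q' != pid n ->
  exists r, psg q r = -1 /\ psg q' r = -1.
Proof.
have nz : forall p, p != pid n -> exists k, p k != 0.
  move=> p hp; apply/existsP; apply: contraR hp => /existsPn h; apply/eqP/ffunP => j.
  by rewrite ffunE; apply/eqP; have := h j; rewrite negbK.
move=> hq hq'.
have [k /andP [hk hk'] | hno] := pickP (fun k => (q k != 0) && (q' k != 0)); last first.
  have [k hk] := nz q hq; have [l hl] := nz q' hq'.
  have qk' : q' k = 0 by have := hno k; rewrite hk /= => /negbFE /eqP.
  have ql : q l = 0 by have := hno l; rewrite hl andbT => /negbFE /eqP.
  have kl : k != l by apply: contraNneq hk => ->; rewrite ql.
  exists [ffun j => if j == k then anti_of (q k) else if j == l then anti_of (q' l) else 0].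
  split; [apply: (psg_single (k:=k)) => j | apply: (psg_single (k:=l)) => j];
    rewrite ffunE.
    have [->|jk] := eqVneq j k; first by rewrite ?eqxx anti_ofP.
    rewrite ?(negbTE jk); have [->|jl] := eqVneq j l; first by rewrite ?eqxx ql anti1_0x.
    by rewrite ?(negbTE jl) anti1_x0.
  have [->|jk] := eqVneq j k; first by rewrite ?eqxx qk' anti1_0x ?(negbTE kl).
  rewrite ?(negbTE jk); have [->|jl] := eqVneq j l; first by rewrite ?eqxx anti_ofP.
  by rewrite ?(negbTE jl) anti1_x0.
have [e|ne] := eqVneq (q k) (q' k).
  exists [ffun j => if j == k then anti_of (q k) else 0].
  split; apply: (psg_single (k:=k)) => j; rewrite ffunE;
    (have [->|jk] := eqVneq j k; [rewrite ?eqxx ?e anti_ofP // -?e | by rewrite ?(negbTE jk) anti1_x0]).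
exists [ffun j => if j == k then pmul (q k) (q' k) else 0].
have := anti_pmul hk hk' ne => /andP [h1 h2].
split; apply: (psg_single (k:=k)) => j; rewrite ffunE;
  (have [->|jk] := eqVneq j k; [by rewrite ?eqxx | by rewrite ?(negbTE jk) anti1_x0]).
Qed.

Lemma dagger_mul m k l (A : 'M[C]_(m, k)) (B : 'M[C]_(k, l)) :
  dagger (A *m B) = dagger B *m dagger A.
Proof.
apply/matrixP => i j; rewrite !mxE (rmorph_sum (@conjc R)); apply: eq_bigr => x _.
by rewrite !mxE rmorphM mulrC.
Qed.

Lemma daggerD m k (A B : 'M[C]_(m, k)) : dagger (A + B) = dagger A + dagger B.
Proof. by apply/matrixP => i j; rewrite !mxE rmorphD. Qed.

Lemma daggerZ m k (c : C) (A : 'M[C]_(m, k)) : dagger (c *: A) = (c^*)%C *: dagger A.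
Proof. by apply/matrixP => i j; rewrite !mxE rmorphM. Qed.

Lemma dagger1 : dagger (1%:M : 'M[C]_d) = 1%:M.
Proof.
apply/matrixP => i j; rewrite !mxE eq_sym.
by case: (i == j); [exact: conjc1 | exact: conjc0].
Qed.

Lemma unitaryC U : unitary U -> dagger U *m U = 1%:M.
Proof. exact: mulmx1C. Qed.

Definition cliffP U := unitary U /\
  forall p, exists q (c : C), iph c /\ U *m P p *m dagger U = c *: P q.

Lemma cliffE U : clifford U <-> cliffP U.
Proof.
split=> -[hu h]; split=> // p.
  by have [q [k e]] := h p; exists q, ('i%C ^+ k); split => //; exists k.
by have [q [c [[k ->] e]]] := h p; exists q, k.
Qed.

Lemma cliff_id : clifford (1%:M : 'M[C]_d).
Proof.
apply/cliffE; split; first by rewrite /unitary dagger1 mul1mx.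
by move=> p; exists p, 1; split; [exact: iph1 | rewrite dagger1 mul1mx mulmx1 scale1r].
Qed.

Lemma cliff_mul U V : clifford U -> clifford V -> clifford (U *m V).
Proof.
move=> /cliffE [hu hU] /cliffE [hv hV]; apply/cliffE; split.
  by rewrite /unitary dagger_mul mulmxA -(mulmxA U) hv mulmx1.
move=> p; have [q [c [hc e]]] := hV p; have [q' [c' [hc' e']]] := hU q.
exists q', (c * c'); split; first exact: iphM.
rewrite dagger_mul.
have -> : U *m V *m P p *m (dagger V *m dagger U) = U *m (V *m P p *m dagger V) *m dagger U.
  by rewrite !mulmxA.
by rewrite e -scalemxAr -scalemxAl e' scalerA.
Qed.

Lemma cliff_dag U z : clifford U ->
  exists q (c : C), c != 0 /\ dagger U *m P z *m U = c *: P q.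
Proof.
move=> /cliffE [hu hU].
have hu' := unitaryC hu.
have [f hf] := fin_all_exists hU.
have back : forall p c r, c != 0 -> U *m P p *m dagger U = c *: P r ->
    P p = c *: (dagger U *m P r *m U).
  move=> p c r hc e.
  have -> : P p = dagger U *m (U *m P p *m dagger U) *m U.
    by rewrite !mulmxA hu' mul1mx -mulmxA hu' mulmx1.
  by rewrite e -scalemxAr -scalemxAl.
have finj : injective f.
  move=> p p' epp.
  have [c [hc e]] := hf p; have [c' [hc' e']] := hf p'.
  rewrite epp in e.
  have e1 := back _ _ _ (iph_neq0 hc) e.
  have e2 := back _ _ _ (iph_neq0 hc') e'.
  apply: (@pauli_lin R n p p' (c / c')).
  by rewrite e1 e2 scalerA divfK //; exact: iph_neq0.
have [c [hc e]] := hf (finv f z).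
rewrite f_finv // in e.
have e1 := back _ _ _ (iph_neq0 hc) e.
exists (finv f z), c^-1; split; first by rewrite invr_eq0 iph_neq0.
by rewrite e1 scalerA mulVf ?scale1r //; exact: iph_neq0.
Qed.
End Cliff.
Section Trans.
Context {R : realType}.
Local Notation C := R[i].
Variable n : nat.
Local Notation d := (2 ^ n)%N.
Local Notation PL := (pauli_label n).
Local Notation P := (@pauli R n).
Implicit Types p q r a b : PL.
Implicit Types U V : 'M[C]_d.
Local Notation psg := (@psg R n).
Local Notation pph := (@pph R n).

Definition sC : C := (((Num.sqrt (2 : R))^-1)%:C)%C.

Lemma sC2 : sC * sC * 2 = 1.
Proof.
have h : (Num.sqrt (2 : R))^-1 * (Num.sqrt 2)^-1 * 2 = 1.
  by rewrite -expr2 exprVn sqr_sqrtr ?ler0n // mulVf ?pnatr_eq0.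
by rewrite /sC -rmorphM -(rmorph_nat (real_complex R) 2) -rmorphM h.
Qed.

Lemma sC_conj : (sC^*)%C = sC.
Proof. exact: conjc_real. Qed.

Ltac fin2 h := match goal with |- _ = ?r =>
  transitivity (sC * sC * 2 * r); [ring | by rewrite h mul1r] end.

Lemma sandwich (A B X : 'M[C]_d) (x y : C) :
  A *m A = 1%:M -> A *m B = - (B *m A) ->
  X *m A = x *: (A *m X) -> X *m B = y *: (B *m X) ->
  (A + B) *m X *m (A + B) = x *: (A *m (A *m X)) + y *: (A *m B *m X)
    + (- x *: (A *m B *m X) + y *: (B *m (B *m X))).
Proof.
move=> hAA hAB hXA hXB.
have hBA : B *m A = - (A *m B) by rewrite hAB opprK.
have e : B *m (A *m X) = - (A *m (B *m X)) by rewrite mulmxA hBA mulNmx mulmxA.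
rewrite !mulmxDl !mulmxDr -!mulmxA hXA hXB -!scalemxAr e.
by rewrite scalerN scaleNr.
Qed.

Definition Vm a b : 'M[C]_d := sC *: (P a + P b).

Lemma Vm_dag a b : dagger (Vm a b) = Vm a b.
Proof. by rewrite /Vm daggerZ daggerD !dagger_pauli sC_conj. Qed.

Lemma Vm_sq a b : psg a b = -1 -> Vm a b *m Vm a b = 1%:M.
Proof.
move=> hab; rewrite /Vm -!scalemxAl -!scalemxAr -?scalemxAl !scalerA.
rewrite mulmxDl !mulmxDr !pauli_sq (pauli_comm a b) hab.
apply/matrixP => i j; rewrite !mxE.
have h := sC2; fin2 h.
Qed.

Lemma Vm_unitary a b : psg a b = -1 -> unitary (Vm a b).
Proof. by move=> h; rewrite /unitary Vm_dag Vm_sq. Qed.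

Lemma Vm_conj a b : psg a b = -1 -> Vm a b *m P a *m Vm a b = P b.
Proof.
move=> hab; rewrite /Vm -!scalemxAl -!scalemxAr -?scalemxAl !scalerA.
have hAB : P a *m P b = - (P b *m P a) by rewrite pauli_comm hab scaleN1r.
have hXA : P a *m P a = 1 *: (P a *m P a) by rewrite scale1r.
have hXB : P a *m P b = (-1) *: (P b *m P a) by rewrite pauli_comm hab.
have e1 : P a *m (P a *m P a) = P a by rewrite pauli_sq mulmx1.
have e2 : P b *m (P b *m P a) = P a by rewrite mulmxA pauli_sq mul1mx.
have e3 : P a *m P b *m P a = - P b by rewrite hAB mulNmx -mulmxA pauli_sq mulmx1.
rewrite (sandwich (pauli_sq a) hAB hXA hXB) e1 e2 e3.
apply/matrixP => i j; rewrite !mxE.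
have := sC2 => h.
fin2 h.
Qed.

Lemma Vm_cliff a b : psg a b = -1 -> clifford (Vm a b).
Proof.
move=> hab; apply/cliffE; split; first exact: Vm_unitary.
move=> p; rewrite Vm_dag /Vm -!scalemxAl -!scalemxAr -?scalemxAl !scalerA.
have hAB : P a *m P b = - (P b *m P a) by rewrite pauli_comm hab scaleN1r.
rewrite (sandwich (pauli_sq a) hAB (pauli_comm p a) (pauli_comm p b)).
rewrite !mulmxA !pauli_sq !mul1mx.
have h2 := sC2.
have [ea|ea] := psg_pm (R:=R) p a; have [eb|eb] := psg_pm (R:=R) p b; rewrite ea eb.
- exists p, 1; split; first exact: iph1.
  apply/matrixP => i j; rewrite !mxE; fin2 h2.
- exists (plab (plab a b) p), (-1 * (pph a b * pph (plab a b) p)).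
  split; first by apply: iphM; [exact: iphN1 | apply: iphM; exact: iph_pph].
  rewrite !pauli_mul -scalemxAl pauli_mul !scalerA.
  apply/matrixP => i j; rewrite !mxE; fin2 h2.
- exists (plab (plab a b) p), (pph a b * pph (plab a b) p).
  split; first by apply: iphM; exact: iph_pph.
  rewrite !pauli_mul -scalemxAl pauli_mul !scalerA.
  apply/matrixP => i j; rewrite !mxE; fin2 h2.
- exists p, (-1); split; first exact: iphN1.
  apply/matrixP => i j; rewrite !mxE; fin2 h2.
Qed.

Lemma trans_cliff q q' : q != pid n -> q' != pid n ->
  exists V, clifford V /\ dagger V *m P q *m V = P q'.
Proof.
move=> hq hq'; have [r [h1 h2]] := anti_exists (R:=R) hq hq'.
have h2' : psg r q' = -1 by rewrite psgC.
exists (Vm q r *m Vm r q'); split; first by apply: cliff_mul; exact: Vm_cliff.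
rewrite dagger_mul !Vm_dag.
have -> : Vm r q' *m Vm q r *m P q *m (Vm q r *m Vm r q') =
  Vm r q' *m (Vm q r *m P q *m Vm q r) *m Vm r q' by rewrite !mulmxA.
by rewrite Vm_conj // Vm_conj.
Qed.
End Trans.
Section Expect.
Context {R : realType}.
Local Notation C := R[i].
Variable n : nat.
Local Notation d := (2 ^ n)%N.
Local Notation PL := (pauli_label n).
Local Notation P := (@pauli R n).
Implicit Types p q r : PL.
Implicit Types U V : 'M[C]_d.

Lemma ReD (x y : C) : complex.Re (x + y) = complex.Re x + complex.Re y.
Proof. by case: x; case: y. Qed.

Lemma Re_sum (I : finType) (F : I -> C) : complex.Re (\sum_i F i) = \sum_i complex.Re (F i).
Proof. by apply: (big_morph (@complex.Re R)) => [x y|]; [exact: ReD | ]. Qed.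

Lemma Re_conj_mul (x : C) (c : R) :
  complex.Re ((x^*)%C * (c%:C)%C * x) = c * sqnorm x.
Proof. by case: x => a b; rewrite /sqnorm /=; ring. Qed.

Definition zlab (z : {ffun 'I_n -> bool}) : PL := [ffun j => if z j then inord 3 else 0].
Definition sigma (z : {ffun 'I_n -> bool}) (s : 'I_d) : R :=
  \prod_j (if z j && bit s j then -1 else 1).

Lemma pauli_zlab z (i k : 'I_d) :
  P (zlab z) i k = if i == k then ((sigma z i)%:C)%C else 0.
Proof.
rewrite mxE; have [<-|hik] := eqVneq i k.
  rewrite rmorph_prod; apply: eq_bigr => j _; rewrite ffunE.
  by case: (z j); case: (bit i j); rewrite /pauli1 /= ?inordK //= ?rmorphN ?rmorph1.
have [j hj] := bits_neq hik.
rewrite (bigD1 j) //= ffunE.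
by case: (z j); rewrite /pauli1 /= ?inordK //= (negbTE hj) mul0r.
Qed.

Lemma expect_zlab (phi : 'cV[C]_d) z :
  pauli_expect phi (zlab z) = \sum_s sigma z s * sqnorm (phi s 0).
Proof.
rewrite /pauli_expect mxE Re_sum; apply: eq_bigr => k _.
rewrite mxE (bigD1 k) //= big1 => [|i hik]; last by rewrite pauli_zlab (negbTE hik) mulr0.
by rewrite pauli_zlab eqxx addr0 !mxE Re_conj_mul.
Qed.

Lemma zlab0 : zlab [ffun => false] = pid n.
Proof. by apply/ffunP => j; rewrite !ffunE. Qed.

Lemma zlab_neq0 z : z != [ffun => false] -> zlab z != pid n.
Proof.
move=> hz; apply: contra hz => /eqP /ffunP h; apply/eqP/ffunP => j.
have := h j; rewrite !ffunE; case: (z j) => // /(congr1 val).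
by rewrite /= inordK.
Qed.

Lemma sigma0 s : sigma [ffun => false] s = 1.
Proof. by apply: big1 => j _; rewrite ffunE. Qed.

Lemma expect_pid (phi : 'cV[C]_d) :
  pauli_expect phi (pid n) = \sum_s sqnorm (phi s 0).
Proof.
rewrite -zlab0 expect_zlab; apply: eq_bigr => s _; by rewrite sigma0 mul1r.
Qed.

Lemma expect_U (psi : 'cV[C]_d) U p :
  pauli_expect (U *m psi) p =
  complex.Re ((dagger psi *m (dagger U *m P p *m U) *m psi) 0 0).
Proof. by rewrite /pauli_expect dagger_mul !mulmxA. Qed.

End Expect.
Section Count.
Context {R : realType}.
Local Notation C := R[i].
Variable n : nat.
Local Notation d := (2 ^ n)%N.
Local Notation PL := (pauli_label n).
Local Notation P := (@pauli R n).
Implicit Types p q r : PL.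
Implicit Types U V : 'M[C]_d.

Lemma ReN (x : C) : complex.Re (- x) = - complex.Re x.
Proof. by case: x. Qed.

Lemma pe4 (psi : 'cV[C]_d) U zz q c : unitary U ->
  dagger U *m P zz *m U = c *: P q ->
  (pauli_expect (U *m psi) zz) ^+ 4 = (pauli_expect psi q) ^+ 4.
Proof.
move=> hu e.
have hu' := unitaryC hu.
have e2 : (dagger U *m P zz *m U) *m (dagger U *m P zz *m U) = 1%:M.
  have -> : dagger U *m P zz *m U *m (dagger U *m P zz *m U) =
    dagger U *m (P zz *m (U *m dagger U) *m P zz) *m U by rewrite !mulmxA.
  by rewrite hu mulmx1 pauli_sq mulmx1 hu'.
rewrite e -scalemxAl -scalemxAr scalerA pauli_sq in e2.
have i0 : 'I_d := Ordinal (expn_gt0 2 n).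
have := congr1 (fun M : 'M[C]_d => M i0 i0) e2; rewrite !mxE eqxx /= mulr1 => cc.
have : c ^+ 2 == 1 by rewrite expr2 cc.
rewrite sqrf_eq1 => /orP [] /eqP hc.
  by rewrite expect_U e hc scale1r.
rewrite expect_U e hc -scalemxAr -scalemxAl mxE mulN1r ReN /pauli_expect.
ring.
Qed.

Lemma norm1_conj (c : C) : `|c| = 1 -> c * (c^*)%C = 1.
Proof. by move=> h; rewrite -normCK h expr1n. Qed.

Lemma norm1_neq0 (c : C) : `|c| = 1 -> c != 0.
Proof. by move=> h; apply: contra_eq_neq h => ->; rewrite normr0 eq_sym oner_neq0. Qed.

Variable reps : seq 'M[C]_d.
Hypothesis hreps : clifford_transversal reps.
Local Notation m := (size reps).
Local Notation Ut j := (nth 0 reps j).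

Lemma hcl (j : 'I_m) : clifford (Ut j).
Proof. by apply: hreps.1; apply: mem_nth. Qed.

Variable zz : PL.
Variable lab : 'I_m -> PL.
Hypothesis hlab : forall j : 'I_m, exists c : C, c != 0 /\
  dagger (Ut j) *m P zz *m Ut j = c *: P (lab j).

Lemma count_le q1 q2 : q1 != pid n -> q2 != pid n ->
  (#|[set j | lab j == q1]| <= #|[set j | lab j == q2]|)%N.
Proof.
move=> hq1 hq2.
have [V [hV eV]] := trans_cliff (R:=R) hq1 hq2.
have hVu : V *m dagger V = 1%:M by case: hV.
have hh : forall j : 'I_m, exists k : 'I_m, phase_equiv (Ut j *m V) (Ut k).
  move=> j; have [k [hk _]] := hreps.2 _ (cliff_mul (hcl j) hV).
  by exists k.
have [h hhP] := fin_all_exists hh.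
have hinj : injective h.
  move=> j k ejk.
  have [c [hc ec]] := hhP j; have [c' [hc' ec']] := hhP k.
  rewrite ejk in ec.
  have ej : Ut j = c *: (Ut (h k) *m dagger V).
    by rewrite scalemxAl -ec -mulmxA hVu mulmx1.
  have ek : Ut (h k) *m dagger V = c'^-1 *: Ut k.
    by rewrite -[Ut k](mulmx1) -hVu mulmxA ec' -scalemxAl scalerA mulVf ?scale1r // norm1_neq0.
  have pj : phase_equiv (Ut j) (Ut k).
    exists (c * c'^-1); split; first by rewrite normrM normfV hc hc' invr1 mulr1.
    by rewrite ej ek scalerA.
  have pjj : phase_equiv (Ut j) (Ut j) by exists 1; rewrite normr1 scale1r.
  have [x [_ hu]] := hreps.2 _ (hcl j).
  by rewrite -(hu j pjj) (hu k pj).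
have hmap : forall j, lab j = q1 -> lab (h j) = q2.
  move=> j ej.
  have [c [hc ec]] := hhP j.
  have [c0 [hc0 e0]] := hlab j.
  have [c1 [hc1 e1]] := hlab (h j).
  have eU : Ut (h j) = c^-1 *: (Ut j *m V) by rewrite ec scalerA mulVf ?scale1r // norm1_neq0.
  rewrite eU daggerZ dagger_mul in e1.
  have hcc : ((c^-1)^*)%C * c^-1 = 1.
    by rewrite fmorphV -invfM mulrC norm1_conj ?invr1.
  have e3 : dagger V *m (dagger (Ut j) *m P zz *m Ut j) *m V = c1 *: P (lab (h j)).
    rewrite -e1 -!scalemxAl -!scalemxAr -?scalemxAl !scalerA hcc scale1r.
    by rewrite !mulmxA.
  rewrite e0 ej -scalemxAr -scalemxAl eV in e3.
  apply/esym; apply: (@pauli_lin R n _ _ (c1 / c0)).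
  by rewrite mulrC -scalerA -e3 scalerA mulVf ?scale1r.
have -> : #|[set j | lab j == q1]| = #|h @: [set j | lab j == q1]|.
  by rewrite card_imset.
apply: subset_leq_card; apply/subsetP => y /imsetP [j]; rewrite !inE => /eqP hj ->.
by rewrite hmap.
Qed.

Lemma sum_lab_gen (F : PL -> R) q0 : q0 != pid n -> (forall j, lab j != pid n) ->
  \sum_j F (lab j) = #|[set j | lab j == q0]|%:R * \sum_(q | q != pid n) F q.
Proof.
move=> hq0 hnz.
rewrite (partition_big lab predT) //= (bigD1 (pid n)) //=.
rewrite big_pred0 => [|j]; last by apply/negbTE; rewrite /=; apply: hnz.
rewrite add0r mulr_sumr; apply: eq_bigr => q hq.
have -> : \sum_(j | true && (lab j == q)) F (lab j) = \sum_(j | lab j == q) F q.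
  by apply: eq_bigr => j /eqP ->.
have -> : \sum_(j | lab j == q) F q = F q *+ #|[set j | lab j == q]|.
  by rewrite -sumr_const; apply: eq_bigl => j; rewrite inE.
have -> : #|[set j | lab j == q]| = #|[set j | lab j == q0]|.
  by apply/eqP; rewrite eqn_leq !count_le.
by rewrite mulr_natl.
Qed.

Lemma sum_lab (F : PL -> R) q0 : q0 != pid n -> (forall j, lab j != pid n) ->
  (\sum_j F (lab j)) * (#|PL|.-1)%:R = m%:R * \sum_(q | q != pid n) F q.
Proof.
move=> hq0 hnz.
have hc : \sum_(q | q != pid n) (1 : R) = (#|PL|.-1)%:R.
  by rewrite -(cardC1 (pid n)) -sumr_const; apply: eq_bigl => q; rewrite !inE.
have hm0 := sum_lab_gen (fun _ => (1 : R)) hq0 hnz.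
rewrite /= hc in hm0.
have hm1 : \sum_(j : 'I_m) (1 : R) = m%:R by rewrite sumr_const card_ord.
rewrite hm1 in hm0.
rewrite (sum_lab_gen F hq0 hnz) hm0; ring.
Qed.
End Count.
Section Expand.
Context {R : realType}.
Variable n : nat.
Local Notation d := (2 ^ n)%N.

Lemma pow4_sum (I : finType) (a : I -> R) :
  (\sum_i a i) ^+ 4 = \sum_i \sum_j \sum_k \sum_l (a i * a j * a k * a l).
Proof.
have e4 : forall x : R, x ^+ 4 = x * x * x * x.
  by move=> x; rewrite !exprS expr0 mulr1 !mulrA.
rewrite e4 -!mulrA mulr_suml; apply: eq_bigr => i _.
rewrite mulr_suml mulr_sumr; apply: eq_bigr => j _.
rewrite mulr_suml !mulr_sumr; apply: eq_bigr => k _.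
by rewrite !mulr_sumr; apply: eq_bigr => l _; rewrite !mulrA.
Qed.

Definition c3 (z : {ffun 'I_n -> bool}) : R := \prod_j (if z j then 3 else 1).

Lemma weight_expand (s1 s2 s3 s4 : 'I_d) :
  (-2 : R) ^- xor_weight s1 s2 s3 s4 =
  (4^-1)^+n * \sum_(z : {ffun 'I_n -> bool})
     c3 z * (sigma z s1 * sigma z s2 * sigma z s3 * sigma z s4).
Proof.
pose b j := bit s1 j (+) bit s2 j (+) bit s3 j (+) bit s4 j.
have step1 : (-2 : R) ^- xor_weight s1 s2 s3 s4 = \prod_j (if b j then (-2)^-1 else 1).
  by rewrite /xor_weight -exprVn -prodr_const big_mkcond /=; apply: eq_bigr => j _; rewrite inE.
have step2 : forall bb : bool, (if bb then (-2 : R)^-1 else 1) =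
    4^-1 * \sum_(t : bool) (if t then 3 * (if bb then -1 else 1) else 1).
  by case; rewrite big_bool /=; field.
rewrite step1; under eq_bigr => j _ do rewrite step2.
rewrite big_split /= prodr_const card_ord.
rewrite (bigA_distr_bigA (fun j (t : bool) => if t then 3 * (if b j then -1 else 1) else 1)).
congr (_ * _); apply: eq_bigr => z _.
rewrite /c3 /sigma -!big_split /=; apply: eq_bigr => j _.
rewrite /b; case: (z j); case: (bit s1 j); case: (bit s2 j); case: (bit s3 j);
  case: (bit s4 j); rewrite /=; ring.
Qed.

Definition Ez (p : 'I_d -> R) (z : {ffun 'I_n -> bool}) := \sum_s sigma z s * p s.

Lemma push4 (I : finType) (k c : R) (f : I -> I -> I -> I -> R) :
  k * (c * \sum_i \sum_j \sum_l \sum_m f i j l m) =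
  \sum_i \sum_j \sum_l \sum_m k * (c * f i j l m).
Proof.
rewrite !mulr_sumr; apply: eq_bigr => i _.
rewrite !mulr_sumr; apply: eq_bigr => j _.
rewrite !mulr_sumr; apply: eq_bigr => l _.
by rewrite !mulr_sumr.
Qed.

Lemma expand (p : 'I_d -> R) :
  \sum_(s1 : 'I_d) \sum_(s2 : 'I_d) \sum_(s3 : 'I_d) \sum_(s4 : 'I_d)
    ((-2 : R) ^- xor_weight s1 s2 s3 s4 * (p s1 * p s2 * p s3 * p s4))
  = (4^-1)^+n * \sum_z c3 z * (Ez p z) ^+ 4.
Proof.
rewrite mulr_sumr.
under [RHS]eq_bigr => z _ do rewrite /Ez pow4_sum push4.
rewrite [RHS]exchange_big; apply: eq_bigr => s1 _.
rewrite [RHS]exchange_big; apply: eq_bigr => s2 _.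
rewrite [RHS]exchange_big; apply: eq_bigr => s3 _.
rewrite [RHS]exchange_big; apply: eq_bigr => s4 _.
rewrite weight_expand -mulrA mulr_suml mulr_sumr; apply: eq_bigr => z _.
ring.
Qed.
End Expand.
Section Final.
Context {R : realType}.
Local Notation C := R[i].
Variable n : nat.
Local Notation d := (2 ^ n)%N.
Local Notation PL := (pauli_label n).
Local Notation P := (@pauli R n).
Hypothesis hn : (1 <= n)%N.
Variable psi : 'cV[C]_d.
Hypothesis hpsi : normalized psi.
Variable reps : seq 'M[C]_d.
Hypothesis hreps : clifford_transversal reps.
Local Notation m := (size reps).
Local Notation Ut j := (nth 0 reps j).
Local Notation S q := (pauli_expect psi q).
Local Notation z0 := ([ffun => false] : {ffun 'I_n -> bool}).
Local Notation N1 := ((4 ^ n).-1%:R : R).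

Lemma S_pid : S (pid n) = 1.
Proof. by rewrite expect_pid. Qed.

Lemma m_gt0 : (0 < m)%N.
Proof. by have [j _] := hreps.2 _ (@cliff_id R n); exact: (leq_ltn_trans (leq0n j) (ltn_ord j)). Qed.

Lemma pe_pid_U (j : 'I_m) : pauli_expect (Ut j *m psi) (pid n) = 1.
Proof.
have := S_pid; rewrite /pauli_expect pauli_id mulmx1 => <-.
have hu := (hcl hreps j).1.
by rewrite dagger_mul mulmx1 mulmxA -(mulmxA (dagger psi)) (unitaryC hu) mulmx1.
Qed.

Lemma cardPL : #|PL| = (4 ^ n)%N.
Proof. by rewrite card_ffun !card_ord. Qed.

Lemma N1_neq0 : N1 != 0.
Proof.
rewrite pnatr_eq0 -lt0n; case: n hn => // k _.
by rewrite expnS; case: (4 ^ k)%N (expn_gt0 4 k) => // t _; rewrite mulnS.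
Qed.

Lemma avg_z z : z != z0 ->
  (m%:R)^-1 * \sum_(j : 'I_m) (pauli_expect (Ut j *m psi) (zlab z)) ^+ 4 =
  N1^-1 * \sum_(q | q != pid n) S q ^+ 4.
Proof.
move=> hz; have hzl := zlab_neq0 hz.
have hh : forall j : 'I_m, exists q, exists c : C, c != 0 /\
    dagger (Ut j) *m P (zlab z) *m Ut j = c *: P q.
  by move=> j; apply: cliff_dag; exact: hcl.
have [lab hlab] := fin_all_exists hh.
have hnz : forall j, lab j != pid n.
  move=> j; apply/negP => /eqP hj.
  have [c [hc e]] := hlab j.
  have hu := (hcl hreps j).1.
  have e2 : P (zlab z) = c *: P (pid n).
    rewrite pauli_id.
    have -> : P (zlab z) = Ut j *m (dagger (Ut j) *m P (zlab z) *m Ut j) *m dagger (Ut j).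
      by rewrite !mulmxA hu mul1mx -mulmxA hu mulmx1.
    by rewrite e hj pauli_id -scalemxAr -scalemxAl mulmx1 hu.
  by move: hzl; rewrite (pauli_lin e2) eqxx.
have hlab' : forall j : 'I_m, exists c : C, c != 0 /\
    dagger (Ut j) *m P (zlab z) *m Ut j = c *: P (lab j) by [].
have hs := sum_lab hreps hlab' (fun q => S q ^+ 4) hzl hnz.
rewrite cardPL in hs.
have -> : \sum_(j : 'I_m) (pauli_expect (Ut j *m psi) (zlab z)) ^+ 4 =
    \sum_(j : 'I_m) S (lab j) ^+ 4.
  apply: eq_bigr => j _; have [c [_ e]] := hlab j.
  exact: (pe4 psi (hcl hreps j).1 e).
have hm : (m%:R : R) != 0 by rewrite pnatr_eq0 -lt0n m_gt0.
have -> : \sum_(j : 'I_m) S (lab j) ^+ 4 =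
    m%:R * (\sum_(q | q != pid n) S q ^+ 4) / N1.
  by rewrite -hs mulfK // N1_neq0.
by field; rewrite hm N1_neq0.
Qed.

Lemma push4b (I : finType) (c : R) (f : I -> I -> I -> I -> R) :
  c * \sum_i \sum_j \sum_l \sum_k f i j l k =
  \sum_i \sum_j \sum_l \sum_k c * f i j l k.
Proof.
rewrite !mulr_sumr; apply: eq_bigr => i _.
rewrite !mulr_sumr; apply: eq_bigr => j _.
rewrite !mulr_sumr; apply: eq_bigr => l _.
by rewrite !mulr_sumr.
Qed.

Lemma pull4 (J : finType) (g : 'I_d -> 'I_d -> 'I_d -> 'I_d -> R)
  (F : J -> 'I_d -> 'I_d -> 'I_d -> 'I_d -> R) (c : R) :
  \sum_(s1 : 'I_d) \sum_(s2 : 'I_d) \sum_(s3 : 'I_d) \sum_(s4 : 'I_d)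
     (g s1 s2 s3 s4 * (c * \sum_j F j s1 s2 s3 s4)) =
  c * \sum_j \sum_(s1 : 'I_d) \sum_(s2 : 'I_d) \sum_(s3 : 'I_d) \sum_(s4 : 'I_d)
     (g s1 s2 s3 s4 * F j s1 s2 s3 s4).
Proof.
rewrite mulr_sumr.
under [RHS]eq_bigr => j _ do rewrite push4b.
rewrite [RHS]exchange_big; apply: eq_bigr => s1 _.
rewrite [RHS]exchange_big; apply: eq_bigr => s2 _.
rewrite [RHS]exchange_big; apply: eq_bigr => s3 _.
rewrite [RHS]exchange_big; apply: eq_bigr => s4 _.
rewrite mulrCA !mulr_sumr; apply: eq_bigr => j _; ring.
Qed.

Lemma c3_sum : \sum_(z : {ffun 'I_n -> bool}) c3 z = (4 ^ n)%:R :> R.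
Proof.
rewrite /c3 -(bigA_distr_bigA (fun j (t : bool) => if t then (3 : R) else 1)) /=.
under eq_bigr => j _ do rewrite big_bool /=.
rewrite prodr_const card_ord natrX; congr (_ ^+ _); ring.
Qed.

Lemma c3_0 : c3 z0 = 1 :> R.
Proof. by apply: big1 => j _; rewrite ffunE. Qed.

Lemma bigsum_eq :
  \sum_(s1 : 'I_d) \sum_(s2 : 'I_d) \sum_(s3 : 'I_d) \sum_(s4 : 'I_d)
     ((-2 : R) ^- xor_weight s1 s2 s3 s4 * Qavg psi reps s1 s2 s3 s4) =
  (4^-1)^+n * (1 + \sum_(q | q != pid n) S q ^+ 4).
Proof.
rewrite /Qavg.
under eq_bigr => s1 _ do under eq_bigr => s2 _ do under eq_bigr => s3 _ do
  under eq_bigr => s4 _ do rewrite (big_nth 0) big_mkord.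
rewrite (pull4 (fun s1 s2 s3 s4 => (-2 : R) ^- xor_weight s1 s2 s3 s4)
  (fun (j : 'I_m) s1 s2 s3 s4 => Pout psi (Ut j) s1 * Pout psi (Ut j) s2 *
      Pout psi (Ut j) s3 * Pout psi (Ut j) s4)).
transitivity ((m%:R)^-1 * \sum_(j : 'I_m) ((4^-1)^+n *
    \sum_z c3 z * (pauli_expect (Ut j *m psi) (zlab z)) ^+ 4)).
  congr (_ * _); apply: eq_bigr => j _; rewrite expand; congr (_ * _).
  by apply: eq_bigr => z _; rewrite /Ez expect_zlab.
rewrite -mulr_sumr exchange_big mulrCA; congr (_ * _).
rewrite mulr_sumr (bigD1 z0) //= zlab0.
under eq_bigr => j _ do rewrite pe_pid_U expr1n.
rewrite sumr_const card_ord c3_0 mul1r mulVf ?pnatr_eq0 -?lt0n ?m_gt0 //.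
congr (_ + _).
transitivity (\sum_(z | z != z0) c3 z * (N1^-1 * \sum_(q | q != pid n) S q ^+ 4)).
  by apply: eq_bigr => z hz; rewrite -(avg_z hz) -mulr_sumr mulrCA.
rewrite -mulr_suml.
have hc : \sum_(z | z != z0) c3 z = N1.
  have := c3_sum; rewrite (bigD1 z0) //= c3_0 => h.
  have e : ((4 ^ n)%:R : R) = N1 + 1 by rewrite -mulrSr prednK // expn_gt0.
  by apply: (@addrI _ 1); rewrite h e addrC.
by rewrite hc mulVKf // N1_neq0.
Qed.
End Final.

Lemma inv_d2 (R : realType) (n : nat) : ((2 ^ n)%:R^-1 : R) ^+ 2 = (4^-1)^+n.
Proof.
rewrite natrX -exprVn -exprM mulnC exprM; congr (_ ^+ _).
by rewrite exprVn expr2 -natrM.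
Qed.


Unset Implicit Arguments. Set Strict Implicit.

Theorem mainTheorem3 (R : realType) (n : nat) (hn : (1 <= n)%N)
  (psi : 'cV[R[i]]_(2 ^ n)) (hpsi : normalized psi)
  (reps : seq 'M[R[i]]_(2 ^ n)) (hreps : clifford_transversal reps) :
  M2 psi =
  - log2 (\sum_(s1 : 'I_(2 ^ n)) \sum_(s2 : 'I_(2 ^ n))
            \sum_(s3 : 'I_(2 ^ n)) \sum_(s4 : 'I_(2 ^ n))
            ((-2 : R) ^- xor_weight s1 s2 s3 s4) * Qavg psi reps s1 s2 s3 s4)
  - log2 (2 ^ n)%:R.
Proof.
rewrite /M2 (bigsum_eq hn hpsi hreps); congr (- log2 _ - _).
under eq_bigr => p _ do rewrite /Xi exprMn -exprM.
rewrite -mulr_sumr inv_d2 (bigD1 (pid n)) //= (S_pid hpsi) expr1n.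
by [].
Qed.
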